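(* For all $y\in\{0,1\}^n$ and all $s_1,\dots,s_\ell\in\{0,1\}^n$, with $S=\{s_1,\dots,s_\ell\}$, $$\tilde G_y^2\,\hat a^\dagger_{s_1}\cdots\hat a^\dagger_{s_\ell}|\mathrm{vac}\rangle=\gamma_y^{(S)}\,\hat a^\dagger_{s_1}\cdots\hat a^\dagger_{s_\ell}|\mathrm{vac}\rangle.$$
   Context: Bosonic setting with $2^n$ modes indexed by $\{0,1\}^n$: position operators $\hat a_x,\hat a_x^\dagger$ with $[\hat a_x,\hat a_y^\dagger]=\delta_{xy}$, $[\hat a_x,\hat a_y]=[\hat a_x^\dagger,\hat a_y^\dagger]=0$, vacuum $|\mathrm{vac}\rangle$ annihilated by all $\hat a_x$; momentum operators $\tilde a_y=2^{-n/2}\sum_x(-1)^{x\cdot y}\hat a_x$, $\tilde a_y^\dagger=2^{-n/2}\sum_x(-1)^{x\cdot y}\hat a_x^\dagger$. Single $y$-momentum hopping operator $\tilde G_y=\frac1{\sqrt\ell}\sum_{x\in\{0,1\}^n}\tilde a^\dagger_{x\oplus y}\tilde a_x$. $\gamma_y^{(S)}=\frac1\ell\sum_{i,j\in[\ell]}(-1)^{y\cdot(s_i\oplus s_j)}$. *)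

(* Defs.v *)
(* scalars in algC (algebraic complex numbers, has sqrtC). *)
From mathcomp Require Import all_boot all_order all_algebra all_field.
Set Implicit Arguments. Unset Strict Implicit. Unset Printing Implicit Defensive.
Import Order.TTheory GRing.Theory Num.Theory.
Local Open Scope ring_scope.

Definition Mode (n : nat) := {ffun 'I_n -> bool}.

Definition xorm n (x y : Mode n) : Mode n := [ffun i => x i (+) y i].
Definition dotm n (x y : Mode n) : nat := (\sum_(i < n) (x i && y i))%N.
Definition sgn n (x y : Mode n) : algC := (-1) ^+ dotm x y.

(* Occupation-number configurations and Fock-space vectors, given by their
   coefficients in the occupation-number (position) basis. *)
Definition Occ n := {ffun Mode n -> nat}.
Definition State n := Occ n -> algC.

Definition setocc n (m : Occ n) (x : Mode n) (k : nat) : Occ n :=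
  [ffun z => if z == x then k else m z].

Definition vac n : State n := fun m => if m == [ffun=> 0%N] then 1 else 0.

(* position creation / annihilation operators:
   a^dag |k> = sqrt(k+1) |k+1>,  a |k> = sqrt k |k-1> *)
Definition adag n (x : Mode n) (psi : State n) : State n := fun m =>
  if m x is k.+1 then sqrtC (k.+1)%:R * psi (setocc m x k) else 0.
Definition ann n (x : Mode n) (psi : State n) : State n := fun m =>
  sqrtC ((m x).+1)%:R * psi (setocc m x (m x).+1).

Definition mann n (y : Mode n) (psi : State n) : State n := fun m =>
  (sqrtC (2 ^ n)%:R)^-1 * \sum_(x : Mode n) sgn x y * ann x psi m.
Definition madag n (y : Mode n) (psi : State n) : State n := fun m =>
  (sqrtC (2 ^ n)%:R)^-1 * \sum_(x : Mode n) sgn x y * adag x psi m.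

Definition Ghop n (l : nat) (y : Mode n) (psi : State n) : State n := fun m =>
  (sqrtC l%:R)^-1 * \sum_(x : Mode n) madag (xorm x y) (mann x psi) m.

Definition gammaS n (l : nat) (y : Mode n) (s : 'I_l -> Mode n) : algC :=
  (l%:R)^-1 * \sum_(i < l) \sum_(j < l) sgn y (xorm (s i) (s j)).

Definition createAll n (l : nat) (s : 'I_l -> Mode n) : State n :=
  foldr (fun x psi => adag x psi) (@vac n) [seq s i | i <- enum 'I_l].

(* Main.v *)
Require Import Defs.
From mathcomp Require Import all_boot all_order all_algebra all_field.
From mathcomp Require Import ring.
From Stdlib Require Import FunctionalExtensionality.
Set Implicit Arguments. Unset Strict Implicit. Unset Printing Implicit Defensive.
Import Order.TTheory GRing.Theory Num.Theory.
Local Open Scope ring_scope.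

Lemma sgnE n (x y : Mode n) : sgn x y = \prod_(i < n) (-1) ^+ (x i && y i).
Proof.
rewrite /sgn /dotm.
by rewrite (big_morph (fun k => (-1 : algC) ^+ k) (fun a b => exprD _ a b) (expr0 _)).
Qed.

Lemma sgnC n (x y : Mode n) : sgn x y = sgn y x.
Proof. by rewrite !sgnE; apply: eq_bigr => i _; rewrite andbC. Qed.

Lemma sgn_xorl n (a b c : Mode n) : sgn (xorm a b) c = sgn a c * sgn b c.
Proof.
rewrite !sgnE -big_split /=; apply: eq_bigr => i _; rewrite ffunE.
by case: (a i); case: (b i); case: (c i); rewrite ?expr0 ?expr1 ?mulr1 ?mul1r ?mulrNN ?mulr1.
Qed.

Lemma sgn_xorr n (a b c : Mode n) : sgn c (xorm a b) = sgn c a * sgn c b.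
Proof. by rewrite sgnC sgn_xorl !(sgnC c). Qed.

Lemma sum_sgn n (w : Mode n) :
  \sum_(x : Mode n) sgn x w = if w == [ffun=> false] then (2 ^ n)%:R else 0.
Proof.
case: eqP => [->|/eqP nz].
  rewrite (eq_bigr (fun _ => 1)); last first.
    by move=> x _; rewrite sgnE big1 // => i _; rewrite ffunE andbF.
  by rewrite sumr_const card_ffun card_bool card_ord.
have [i wi] : exists i, w i.
  apply/existsP; apply: contraR nz => /existsPn H; apply/eqP/ffunP => i.
  by rewrite ffunE; apply/negbTE.
set e : Mode n := [ffun j => j == i].
have inv : cancel (fun x : Mode n => xorm x e) (fun x => xorm x e).
  by move=> x; apply/ffunP => j; rewrite !ffunE addbK.
have se : sgn e w = -1.
  rewrite sgnE (bigD1 i) //= big1 ?mulr1; first by rewrite ffunE eqxx wi expr1.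
  by move=> j /negbTE ji; rewrite ffunE ji.
set S := \sum_(x : Mode n) sgn x w.
have : S = - S.
  rewrite {1}/S (reindex_inj (can_inj inv)) /=.
  by under eq_bigr do rewrite sgn_xorl se mulrN1; rewrite sumrN.
move/eqP; rewrite -subr_eq0 opprK -mulr2n -mulr_natr mulf_eq0 pnatr_eq0 orbF.
by move/eqP.
Qed.

Lemma sgn_ortho n (u v : Mode n) :
  \sum_(x : Mode n) sgn x u * sgn x v = if u == v then (2 ^ n)%:R else 0.
Proof.
under eq_bigr do rewrite -sgn_xorr.
rewrite sum_sgn; congr (if _ then _ else _).
apply/eqP/eqP => [H|->]; last by apply/ffunP => j; rewrite !ffunE addbb.
apply/ffunP => j; move/ffunP: H => /(_ j); rewrite !ffunE.
by case: (u j); case: (v j).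
Qed.

Lemma adag_mann n (u x : Mode n) (psi : State n) m :
  adag u (mann x psi) m =
  (sqrtC (2 ^ n)%:R)^-1 * \sum_(v : Mode n) sgn v x * adag u (ann v psi) m.
Proof.
rewrite /adag /mann; case: (m u) => [|j].
  by rewrite big1 ?mulr0 // => v _; rewrite mulr0.
by rewrite mulrCA mulr_sumr; congr (_ * _); apply: eq_bigr => v _; rewrite mulrCA.
Qed.

Lemma adag_ann n (u : Mode n) (psi : State n) m :
  adag u (ann u psi) m = (m u)%:R * psi m.
Proof.
rewrite /adag /ann; case E: (m u) => [|j]; first by rewrite mul0r.
rewrite ffunE eqxx mulrA -expr2 sqrtCK; congr (_ * psi _).
by apply/ffunP => z; rewrite !ffunE; case: eqP => [->|]; rewrite ?eqxx ?E.
Qed.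

Lemma Ghop_diag n l (y : Mode n) (psi : State n) m :
  Ghop l y psi m =
  (sqrtC l%:R)^-1 * (\sum_(u : Mode n) sgn u y * (m u)%:R) * psi m.
Proof.
set h := (sqrtC (2 ^ n)%:R : algC)^-1.
have hhN : h * h * (2 ^ n)%:R = 1.
  rewrite -expr2 /h exprVn sqrtCK mulVf // pnatr_eq0 expn_eq0 //.
rewrite /Ghop -mulrA; congr (_ * _).
have E : forall x : Mode n, madag (xorm x y) (mann x psi) m =
   h * h * \sum_(u : Mode n) \sum_(v : Mode n)
      (sgn u (xorm x y) * sgn v x) * adag u (ann v psi) m.
  move=> x; rewrite /madag -/h; under eq_bigr do rewrite adag_mann -/h.
  rewrite -mulrA; congr (_ * _); rewrite mulr_sumr; apply: eq_bigr => u _.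
  rewrite mulrCA mulr_sumr; congr (_ * _); apply: eq_bigr => v _.
  by rewrite mulrA.
under eq_bigr do rewrite E.
rewrite -mulr_sumr exchange_big /=.
have F : forall u : Mode n, \sum_(x : Mode n) \sum_(v : Mode n)
      (sgn u (xorm x y) * sgn v x) * adag u (ann v psi) m =
      sgn u y * (2 ^ n)%:R * ((m u)%:R * psi m).
  move=> u; rewrite exchange_big /=.
  rewrite (bigD1 u) //= [X in _ + X]big1 ?addr0; last first.
    move=> v vu; rewrite -mulr_suml.
    under eq_bigr do rewrite sgnC sgn_xorl mulrAC -mulrA (sgnC v).
    by under eq_bigr do rewrite mulrA; rewrite -mulr_suml sgn_ortho eq_sym (negbTE vu) !mul0r.
  rewrite -mulr_suml adag_ann.
  under eq_bigr do rewrite sgnC sgn_xorl mulrAC.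
  under eq_bigr do rewrite (sgnC u).
  by rewrite -mulr_suml sgn_ortho eqxx (sgnC y); congr (_ * _); rewrite mulrC.
under eq_bigr do rewrite F.
rewrite mulr_suml mulr_sumr; apply: eq_bigr => u _.
transitivity (h * h * (2 ^ n)%:R * (sgn u y * (m u)%:R * psi m)); first ring.
by rewrite hhN mul1r.
Qed.

Definition occ n (xs : seq (Mode n)) : Occ n := [ffun z => count_mem z xs].

Lemma foldr_supp n (xs : seq (Mode n)) m :
  foldr (fun x psi => adag x psi) (@vac n) xs m != 0 -> m = occ xs.
Proof.
elim: xs m => [|x xs IH] m /=.
  rewrite /vac; case: (m =P [ffun=> 0%N]) => [-> _|_]; last by rewrite eqxx.
  by apply/ffunP => z; rewrite !ffunE.
rewrite /adag; case E: (m x) => [|j]; first by rewrite eqxx.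
rewrite mulf_eq0 negb_or => /andP [_ /IH H].
apply/ffunP => z; rewrite ffunE /=.
have := congr1 (fun f : Occ n => f z) H; rewrite /occ !ffunE.
case: eqP => [->|/eqP zx]; first by rewrite eqxx E => <-.
by move=> ->; rewrite eq_sym (negbTE zx).
Qed.

Lemma sum_count n (f : Mode n -> algC) (xs : seq (Mode n)) :
  \sum_(u : Mode n) f u * (count_mem u xs)%:R = \sum_(x <- xs) f x.
Proof.
elim: xs => [|x xs IH] /=.
  by rewrite big_nil big1 // => u _; rewrite mulr0.
rewrite big_cons -IH.
under eq_bigr do rewrite natrD mulrDr.
rewrite big_split /=; congr (_ + _).
rewrite (bigD1 x) //= eqxx mulr1 big1 ?addr0 // => u ux.
by rewrite eq_sym (negbTE ux) mulr0.
Qed.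

Theorem mainTheorem10 (n l : nat) (y : Mode n) (s : 'I_l -> Mode n) :
  Ghop l y (Ghop l y (createAll s)) = (fun m => gammaS y s * createAll s m).
Proof.
apply: functional_extensionality => m.
rewrite !Ghop_diag.
set psi := createAll s m.
have [->|nz] := eqVneq psi 0; first by rewrite !mulr0.
have Hm : m = occ [seq s i | i <- enum 'I_l] by apply: foldr_supp.
set C := \sum_(i < l) sgn (s i) y.
have HC : \sum_(u : Mode n) sgn u y * (m u)%:R = C.
  rewrite Hm; under eq_bigr do rewrite ffunE.
  by rewrite sum_count big_map big_enum.
have HG : gammaS y s = (l%:R)^-1 * (C * C).
  rewrite /gammaS /C mulr_suml; congr (_ * _); apply: eq_bigr => i _.
  rewrite mulr_sumr; apply: eq_bigr => j _.
  by rewrite sgn_xorr !(sgnC y).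
have Hk : (sqrtC l%:R)^-1 * (sqrtC l%:R)^-1 = (l%:R : algC)^-1.
  by rewrite -expr2 exprVn sqrtCK.
rewrite HC HG -Hk; ring.
Qed.
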